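(* For all integers $n\geq 1$ and $0\leq m\leq n$, \[ K_q(n,m)=\sum_{w\in\mathcal{K}(m,n-m+1)} q^{\mathrm{inv}(w)}=\sum_{w\in\overline{\mathcal{K}}(m,n-m+1)} q^{\mathrm{maj}(w)}. \]
   Context: For integers $n\ge m\ge 0$ the Gaussian polynomial is ${n\brack m}=\prod_{i=0}^{m-1}\frac{1-q^{n-i}}{1-q^{m-i}}$. For $n\geq 1$ and $0\le m\le n$, the $q$-Kaplansky number is $K_q(n,m)=\frac{1-q^{n+m}}{1-q^{n}}{n\brack m}$ (a polynomial in $q$). For a $(0,1)$-sequence $w=w_1w_2\cdots w_N$, $\mathrm{inv}(w)$ is the number of pairs $i<j$ with $w_i>w_j$, and $\mathrm{maj}(w)$ is the sum of all indices $i<N$ with $w_i>w_{i+1}$. $\mathcal{K}(m,n-m+1)$ is the set of $(0,1)$-sequences $w=w_1\cdots w_{n+1}$ of length $n+1$ with exactly $m$ ones and $n-m+1$ zeros such that if $w_{n+1}=1$ then $w_1=0$. $\overline{\mathcal{K}}(m,n-m+1)$ is the set of $(0,1)$-sequences $w=w_1\cdots w_{n+1}$ with exactly $m$ ones and $n-m+1$ zeros such that if $w_{n+1}=1$, then, letting $t=\max\{i: w_i=0\}$, either $t=1$ or ($t\ge 2$ and $w_{t-1}=0$). *)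

(* Defs.v *)
From mathcomp Require Import all_boot all_order all_algebra.
Set Implicit Arguments. Unset Strict Implicit. Unset Printing Implicit Defensive.
Import GRing.Theory.
Local Open Scope ring_scope.

(* Polynomials in q are elements of {poly rat}; q is 'X. *)

(* Gaussian polynomial [n brack m] = prod_{i<m} (1-q^(n-i))/(1-q^(m-i)),
   realised as the (exact) polynomial quotient. *)
Definition gauss (n m : nat) : {poly rat} :=
  (\prod_(i < m) (1 - 'X^(n - i))) %/ (\prod_(i < m) (1 - 'X^(m - i))).

Definition qKap (n m : nat) : {poly rat} :=
  ((1 - 'X^(n + m)) * gauss n m) %/ (1 - 'X^n).

(* (0,1)-sequences: tuples of bools, true = 1, false = 0.
   Positions are 1-based in the paper: w_i = nth false w (i-1). *)
Definition wat (N : nat) (w : N.-tuple bool) (i : nat) : bool :=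
  nth false w i.-1.

Definition invw (N : nat) (w : N.-tuple bool) : nat :=
  \sum_(1 <= i < N.+1) \sum_(i.+1 <= j < N.+1) ((wat w i && ~~ wat w j) : nat).

Definition majw (N : nat) (w : N.-tuple bool) : nat :=
  \sum_(1 <= i < N) (if wat w i && ~~ wat w i.+1 then i else 0%N).

Definition nones (N : nat) (w : N.-tuple bool) : nat := count id w.

(* K(m, n-m+1): length n+1, m ones (hence n-m+1 zeros), w_{n+1}=1 -> w_1=0 *)
Definition Kset (n m : nat) (w : n.+1.-tuple bool) : bool :=
(nones w == m) && (wat w n.+1 ==> ~~ wat w 1).

(* largest index of a zero (0 if none) *)
Definition lastzero (N : nat) (w : N.-tuple bool) : nat :=
  \max_(1 <= i < N.+1 | ~~ wat w i) i.

Definition Kbarset (n m : nat) (w : n.+1.-tuple bool) : bool :=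
(nones w == m) &&
    (wat w n.+1 ==>
       ((lastzero w == 1%N) || ((2 <= lastzero w)%N && ~~ wat w (lastzero w).-1))).
Arguments Kset n m w : clear implicits.
Arguments Kbarset n m w : clear implicits.

(* Main.v *)
Require Import Defs.
From mathcomp Require Import all_boot all_order all_algebra zify ring lra.
Import GRing.Theory.
Local Open Scope ring_scope.

Fixpoint Sum (N : nat) (F : seq bool -> {poly rat}) : {poly rat} :=
  match N with
  | 0 => F [::]
  | N'.+1 => Sum N' (fun s => F (false :: s)) + Sum N' (fun s => F (true :: s))
  end.

Lemma eq_Sum N F G : (forall s, size s = N -> F s = G s) -> Sum N F = Sum N G.
Proof.
elim: N F G => [|N IH] F G H /=; first by rewrite H.
by congr (_ + _); apply: IH => s Hs; apply: H; rewrite /= Hs.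
Qed.

Lemma Sum_add N F G : Sum N (fun s => F s + G s) = Sum N F + Sum N G.
Proof.
elim: N F G => [|N IH] F G //=.
by rewrite !IH addrACA.
Qed.

Lemma Sum_opp N F : Sum N (fun s => - F s) = - Sum N F.
Proof.
elim: N F => [|N IH] F //=.
by rewrite !IH opprD.
Qed.

Lemma Sum_mull N c F : Sum N (fun s => c * F s) = c * Sum N F.
Proof.
elim: N F => [|N IH] F //=.
by rewrite !IH mulrDr.
Qed.

Lemma Sum0 N : Sum N (fun _ => 0) = 0.
Proof. by elim: N => [|N IH] //=; rewrite IH addr0. Qed.

Lemma Sum_rcons N F : Sum N.+1 F =
  Sum N (fun s => F (rcons s false)) + Sum N (fun s => F (rcons s true)).
Proof.
elim: N F => [|N IH] F //.
have -> : Sum N.+2 F = Sum N.+1 (fun s => F (false::s)) + Sum N.+1 (fun s => F (true::s)) by [].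
rewrite (IH (fun s => F (false::s))) (IH (fun s => F (true::s))).
have -> : forall b, Sum N.+1 (fun s => F (rcons s b)) =
   Sum N (fun s => F (rcons (false :: s) b)) + Sum N (fun s => F (rcons (true :: s) b)) by [].
by rewrite addrACA.
Qed.

Lemma tuple_Sum N F : \sum_(w : N.-tuple bool) F (tval w) = Sum N F.
Proof.
elim: N F => [|N IH] F /=.
  rewrite (eq_bigr (fun _ => F [::])); last by move=> w _; rewrite tuple0.
  by rewrite sumr_const card_tuple expn0.
rewrite (reindex (fun p : bool * N.-tuple bool => [tuple of p.1 :: p.2])) /=; last first.
  exists (fun w : N.+1.-tuple bool => (thead w, [tuple of behead w])).
    by case=> b w _ /=; congr pair; apply: val_inj.
  by move=> w _; rewrite [in RHS](tuple_eta w).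
rewrite -(pair_big xpredT xpredT (fun b (w : N.-tuple bool) => F (b :: tval w))) /=.
rewrite big_bool /= addrC; congr (_ + _); exact: (IH (fun s => F (_ :: s))).
Qed.


Definition watS (s : seq bool) (i : nat) : bool := nth false s i.-1.
Definition invS (N : nat) (w : seq bool) : nat :=
  \sum_(1 <= i < N.+1) \sum_(i.+1 <= j < N.+1) ((watS w i && ~~ watS w j) : nat).
Definition majS (N : nat) (w : seq bool) : nat :=
  \sum_(1 <= i < N) (if watS w i && ~~ watS w i.+1 then i else 0%N).
Definition lzS (N : nat) (w : seq bool) : nat :=
  \max_(1 <= i < N.+1 | ~~ watS w i) i.
Definition gzS N w := (lzS N w == 1%N) || ((2 <= lzS N w)%N && ~~ watS w (lzS N w).-1).
Definition KsetS (n m : nat) (w : seq bool) : bool :=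
(count id w == m) && (watS w n.+1 ==> ~~ watS w 1).
Definition KbarS (n m : nat) (w : seq bool) : bool :=
(count id w == m) && (watS w n.+1 ==> gzS n.+1 w).

Lemma Kset_S n m (w : n.+1.-tuple bool) : Kset n m w = KsetS n m (tval w).
Proof. by []. Qed.
Lemma Kbar_S n m (w : n.+1.-tuple bool) : Kbarset n m w = KbarS n m (tval w).
Proof. by []. Qed.
Lemma inv_S N (w : N.-tuple bool) : invw w = invS N (tval w).
Proof. by []. Qed.
Lemma maj_S N (w : N.-tuple bool) : majw w = majS N (tval w).
Proof. by []. Qed.

Lemma sum_count (P : pred bool) s :
  (\sum_(0 <= j < size s) (P (nth false s j) : nat))%N = count P s.
Proof.
elim: s => [|x s IH]; first by rewrite big_geq.
by rewrite /= big_nat_recl //= -IH.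
Qed.

Lemma sum_countS (P : pred bool) N s : size s = N ->
  (\sum_(1 <= j < N.+1) (P (watS s j) : nat))%N = count P s.
Proof.
move=> <-; by rewrite big_add1 /= -sum_count.
Qed.

Lemma invS_cons N b s : size s = N ->
  invS N.+1 (b :: s) = ((if b then count negb s else 0) + invS N s)%N.
Proof.
move=> Hs; rewrite /invS big_nat_recl //; congr addn.
  rewrite big_add1 /=.
  rewrite (eq_big_nat _ _ (F2 := fun j => (b && ~~ watS s j : nat))); last first.
    by move=> j /andP[Hj _]; rewrite /watS /=; case: j Hj.
  case: b; last by rewrite big1.
  exact: (sum_countS negb N s Hs).
apply: eq_big_nat => i /andP[Hi _].
rewrite big_add1 /=.
apply: eq_big_nat => j /andP[Hj _].
by rewrite /watS /=; case: i Hi Hj => [|i] //; case: j.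
Qed.

Fixpoint invR (s : seq bool) : nat :=
  if s is b :: s' then ((if b then count negb s' else 0) + invR s')%N else 0%N.

Lemma invS_R s : invS (size s) s = invR s.
Proof.
elim: s => [|b0 s IH]; first by rewrite /invS big_geq.
by rewrite /= invS_cons // IH.
Qed.

Lemma invR_rcons s b : invR (rcons s b) = (invR s + (if b then 0 else count id s))%N.
Proof.
elim: s => [|x s IH] /=; first by case: b.
rewrite IH -cats1 count_cat /=; clear IH.
case: x; case: b => /=; rewrite ?addn0 ?add0n ?addnA //; lia.
Qed.

Lemma nth_rcons_lt s b i : (i < size s)%N -> nth false (rcons s b) i = nth false s i.
Proof. by move=> H; rewrite nth_rcons H. Qed.

Lemma majS_rcons N s b : size s = N ->
  majS N.+1 (rcons s b) = (majS N s + (if last false s && ~~ b then N else 0))%N.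
Proof.
case: N => [|N] Hs.
  by move/size0nil: Hs => ->; rewrite /majS !big_geq.
rewrite /majS big_nat_recr //=; congr addn.
  apply: eq_big_nat => i /andP[Hi1 Hi2].
  rewrite /watS !nth_rcons_lt ?Hs //; case: i Hi1 Hi2 => //= i _ H; rewrite ltnW //.
rewrite /watS /= nth_rcons_lt ?Hs // nth_rcons Hs ltnn eqxx.
have -> : nth false s N = last false s by rewrite -nth_last Hs.
by [].
Qed.

Lemma lzS_le N s : (lzS N s <= N)%N.
Proof.
apply/bigmax_leqP_seq => i; rewrite mem_index_iota => /andP[_ H] _.
by rewrite -ltnS.
Qed.

Lemma lzS_rcons N s b : size s = N ->
  lzS N.+1 (rcons s b) = if b then lzS N s else N.+1.
Proof.
move=> Hs; rewrite /lzS big_mkcond big_nat_recr //= /watS /=.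
rewrite nth_rcons Hs ltnn eqxx.
rewrite (eq_big_nat _ _ (F2 := fun i => if ~~ watS s i then i else 0%N)); last first.
  move=> i /andP[Hi1 Hi2]; rewrite /watS nth_rcons_lt // Hs.
  by case: i Hi1 Hi2 => //= i _ H; rewrite -ltnS.
rewrite -big_mkcond; case: b => /=; first by rewrite maxn0.
apply/maxn_idPr; apply: leqW; exact: lzS_le.
Qed.

Lemma gz_true N s : size s = N -> gzS N.+1 (rcons s true) = gzS N s.
Proof.
move=> Hs; rewrite /gzS lzS_rcons //=.
case H2: (2 <= lzS N s)%N => //=.
rewrite /watS nth_rcons_lt // Hs.
have := lzS_le N s; case: (lzS N s) H2 => // [] [] // k _ /= Hk; lia.
Qed.

Lemma gz_false N s : size s = N -> gzS N.+1 (rcons s false) = ~~ last false s.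
Proof.
move=> Hs; rewrite /gzS lzS_rcons //=.
case: N Hs => [|N] Hs; first by move/size0nil: Hs => ->.
rewrite /watS /= nth_rcons_lt ?Hs //.
by rewrite -nth_last Hs.
Qed.

Lemma watS_last N s : size s = N.+1 -> watS s N.+1 = last false s.
Proof. by move=> Hs; rewrite /watS /= -nth_last Hs. Qed.


Fixpoint gb (N m : nat) : {poly rat} :=
  match N, m with
  | _, 0 => 1
  | 0, _.+1 => 0
  | N'.+1, m'.+1 => gb N' m' + 'X^(m'.+1) * gb N' m'.+1
  end.

Lemma gb0 N : gb N 0 = 1. Proof. by case: N. Qed.
Lemma gbS N m : gb N.+1 m.+1 = gb N m + 'X^(m.+1) * gb N m.+1. Proof. by []. Qed.

Lemma gb_gt N m : (N < m)%N -> gb N m = 0.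
Proof.
elim: N m => [|N IH] [|m] //= H.
by rewrite !IH ?mulr0 ?addr0 //; lia.
Qed.

Lemma gbNN N : gb N N = 1.
Proof. by elim: N => [|N IH] //=; rewrite IH gb_gt ?mulr0 ?addr0. Qed.

Lemma gbP2_aux N : forall k a, N = (k + a)%N ->
  gb N.+1 k.+1 = gb N k.+1 + 'X^a * gb N k.
Proof.
elim: N => [|N IH] k a H.
  have Hk : k = 0%N by lia.
  have Ha : a = 0%N by lia.
  subst.
  by rewrite gbS gb0 expr0 mul1r; simpl gb; rewrite mulr0 addr0 add0r.
case: k H => [|k] H.
  have -> : a = N.+1 by lia.
  rewrite [LHS]gbS [in RHS]gbS !gb0 (IH 0%N N) // gb0.
  rewrite !exprS expr0; ring.
case: a H => [|a] H.
  have -> : k = N by lia.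
  by rewrite gbS (@gb_gt N.+1 N.+2) // gbNN mulr0 addr0 expr0 mul1r add0r.
rewrite [LHS]gbS [in RHS]gbS [in RHS]gbS (IH k a.+1) ?(IH k.+1 a) //; try lia.
rewrite !exprS; ring.
Qed.

Lemma gbP2 k a : gb (k + a).+1 k.+1 = gb (k + a) k.+1 + 'X^a * gb (k + a) k.
Proof. exact: gbP2_aux. Qed.

Lemma gbR1 k a : (1 - 'X^a) * gb (k + a).+1 k.+1 = (1 - 'X^((k + a).+1)) * gb (k + a) k.+1.
Proof.
have E1 := gbS (k + a) k.
have E2 := gbP2 k a.
have -> : 'X^((k + a).+1) = 'X^(k.+1) * 'X^a :> {poly rat} by rewrite -exprD addSn.
set G := gb (k + a).+1 k.+1 in E1 E2 *.
set A := gb (k + a) k in E1 E2 *.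
set B := gb (k + a) k.+1 in E1 E2 *.
have -> : (1 - 'X^a) * G = G - 'X^a * G by ring.
rewrite [in X in _ - X]E1 {1}E2; ring.
Qed.

Lemma gbR2 k a : (1 - 'X^(k.+1)) * gb (k + a).+1 k.+1 = (1 - 'X^((k + a).+1)) * gb (k + a) k.
Proof.
have E1 := gbS (k + a) k.
have E2 := gbP2 k a.
have -> : 'X^((k + a).+1) = 'X^(k.+1) * 'X^a :> {poly rat} by rewrite -exprD addSn.
set G := gb (k + a).+1 k.+1 in E1 E2 *.
set A := gb (k + a) k in E1 E2 *.
set B := gb (k + a) k.+1 in E1 E2 *.
have -> : (1 - 'X^(k.+1)) * G = G - 'X^(k.+1) * G by ring.
rewrite [in X in _ - X]E2 {1}E1; ring.
Qed.

Lemma oneX_neq0 k : (0 < k)%N -> (1 - 'X^k : {poly rat}) != 0.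
Proof.
move=> Hk; apply/eqP => H; have := congr1 (horner^~ 0) H.
rewrite !hornerE expr0n; case: k Hk H => // k _ _ /=.
Qed.

Lemma key k a :
  (1 - 'X^(k.+2 + a)) * (gb (k.+2 + a).+1 k.+2 - 'X^(a.+1) * gb (k.+2 + a).-1 k)
  = (1 - 'X^(k.+2 + a + k.+2)) * gb (k.+2 + a) k.+2.
Proof.
have Ea := gbR2 k a.+1.
have Eb := gbR2 k.+1 a.+1.
have Ec := gbR1 k.+1 a.+1.
rewrite (_ : (k + a.+1).+1 = k.+2 + a)%N in Ea; last by lia.
rewrite (_ : (k + a.+1) = (k.+2 + a).-1)%N in Ea; last by lia.
rewrite (_ : (k.+1 + a.+1).+1 = (k.+2 + a).+1)%N in Eb Ec; last by lia.
rewrite (_ : (k.+1 + a.+1) = k.+2 + a)%N in Eb Ec; last by lia.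
move: Ea Eb Ec.
set n := (k.+2 + a)%N.
move=> Ea Eb Ec.
have ET : (1 - 'X^(n.+1)) * ((1 - 'X^n) * gb n.-1 k) = (1 - 'X^(k.+1)) * ((1 - 'X^(k.+2)) * gb n.+1 k.+2).
  by rewrite -Ea Eb; ring.
apply: (mulIf (oneX_neq0 _ (ltn0Sn n))).
transitivity ((1 - 'X^n) * (1 - 'X^(n.+1)) * gb n.+1 k.+2 - 'X^(a.+1) * ((1 - 'X^(n.+1)) * ((1 - 'X^n) * gb n.-1 k))).
  ring.
rewrite ET.
transitivity ((1 - 'X^(n + k.+2)) * ((1 - 'X^(a.+1)) * gb n.+1 k.+2)); last by rewrite Ec; ring.
rewrite /n ?(exprD, exprS); ring.
Qed.

Definition Aprod (n m : nat) : {poly rat} := \prod_(i < m) (1 - 'X^(n - i)).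

Lemma Aprod_rec n m : Aprod n.+1 m.+1 = (1 - 'X^(n.+1)) * Aprod n m.
Proof.
rewrite /Aprod big_ord_recl /= subn0; by congr (_ * _).
Qed.

Lemma Aprod_neq0 m : Aprod m m != 0.
Proof.
elim: m => [|m IH]; first by rewrite /Aprod big_ord0 oner_neq0.
by rewrite Aprod_rec mulf_neq0 // oneX_neq0.
Qed.

Lemma Aprod_gb n m : Aprod m m * gb n m = Aprod n m.
Proof.
elim: n m => [|n IH] [|m].
- by rewrite /Aprod big_ord0 mulr1.
- by rewrite /= mulr0 /Aprod big_ord_recl /= subn0 expr0 subrr mul0r.
- by rewrite gb0 /Aprod !big_ord0 mulr1.
rewrite !Aprod_rec -IH.
case: (leqP m n) => Hmn.
  have E : n = (m + (n - m))%N by lia.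
  have R := gbR2 m (n - m); rewrite -E in R.
  rewrite mulrAC R; ring.
by rewrite !gb_gt // !mulr0.
Qed.

Lemma gauss_gb n m : gauss n m = gb n m.
Proof.
by rewrite /gauss -!/(Aprod _ _) -Aprod_gb mulrC mulpK // Aprod_neq0.
Qed.

Definition Kf (n m : nat) : {poly rat} :=
  gb n.+1 m - (if m is m'.+2 then 'X^(n.+1 - m) * gb n.-1 m' else 0).

Lemma qKap_Kf n m : (1 <= n)%N -> (m <= n)%N -> qKap n m = Kf n m.
Proof.
move=> Hn Hm; rewrite /qKap gauss_gb.
suff -> : (1 - 'X^(n + m)) * gb n m = Kf n m * (1 - 'X^n).
  by rewrite mulpK // oneX_neq0.
case: m Hm => [|[|k]] Hm.
- by rewrite /Kf !gb0 subr0 addn0 mulr1 mul1r.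
- rewrite /Kf subr0 mulrC.
  have := gbR1 0 n; rewrite !add0n => R. by rewrite addn1 [LHS]mulrC -R mulrC.
have -> : n = (k.+2 + (n - k.+2))%N by lia.
rewrite /Kf -key.
have -> : ((k.+2 + (n - k.+2)).+1 - k.+2 = (n - k.+2).+1)%N by lia.
by rewrite mulrC.
Qed.


Lemma count_rcons' s b : count id (rcons s b) = (count id s + b)%N.
Proof. by rewrite -cats1 count_cat /= addn0. Qed.

Lemma count_negb s : (count negb s + count id s)%N = size s.
Proof. elim: s => [|[] s IH] //=; lia. Qed.

Lemma Sum_cons N F : Sum N.+1 F = Sum N (fun s => F (false :: s)) + Sum N (fun s => F (true :: s)).
Proof. by []. Qed.

Definition Tinv N m := Sum N (fun s => if count id s == m then 'X^(invR s) else 0).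

Lemma Tinv_gb N m : Tinv N m = gb N m.
Proof.
elim: N m => [|N IH] m.
  by rewrite /Tinv /=; case: m.
rewrite /Tinv Sum_rcons.
rewrite (eq_Sum _ _ (fun s => 'X^m * (if count id s == m then 'X^(invR s) else 0))); last first.
  move=> s _; rewrite count_rcons' invR_rcons addn0.
  by case: eqP => [->|]; rewrite ?mulr0 // exprD mulrC.
rewrite Sum_mull -/(Tinv N m) IH.
case: m => [|m].
  rewrite (eq_Sum _ _ (fun _ => 0)); last by move=> s _; rewrite count_rcons' addn1.
  by rewrite Sum0 addr0 !gb0 expr0 mul1r.
rewrite (eq_Sum _ _ (fun s => if count id s == m then 'X^(invR s) else 0)); last first.
  by move=> s _; rewrite count_rcons' invR_rcons addn0 addn1 eqSS.
by rewrite -/(Tinv N m) IH gbS addrC.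
Qed.

Lemma KsetS_eq n m s : size s = n.+1 ->
  KsetS n m s = (count id s == m) && (last false s ==> ~~ head false s).
Proof. by move=> Hs; rewrite /KsetS watS_last. Qed.

Lemma Kinv_sum n m : (1 <= n)%N ->
  Sum n.+1 (fun s => if KsetS n m s then 'X^(invS n.+1 s) else 0) = Kf n m.
Proof.
case: n => [|n] // _.
rewrite (eq_Sum _ _ (fun s => (if count id s == m then 'X^(invR s) else 0)
   - (if (count id s == m) && head false s && last false s then 'X^(invR s) else 0))); last first.
  move=> s Hs; rewrite KsetS_eq // -Hs invS_R.
  by case: (count id s == m); case: (head false s); case: (last false s); rewrite /= ?subr0 ?subrr.
rewrite Sum_add Sum_opp -/(Tinv _ m) Tinv_gb /Kf; congr (_ - _).
have -> : Sum n.+2 (fun s => if (count id s == m) && head false s && last false s then 'X^(invR s) else 0)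
  = Sum n.+1 (fun s => if (count id s == m.-1) && (m != 0%N) && last true s then 'X^(count negb s + invR s) else 0).
  rewrite Sum_cons.
  rewrite (eq_Sum _ _ (fun _ => 0)); last by move=> s _; rewrite /= andbF.
  rewrite Sum0 add0r; apply: eq_Sum => s _ /=.
  by case: m => [|m] /=; rewrite ?andbF // eqSS.
rewrite Sum_rcons.
rewrite (eq_Sum _ _ (fun _ => 0)); last by move=> s _; rewrite last_rcons andbF.
rewrite Sum0 add0r.
case: m => [|[|k]].
- by rewrite (eq_Sum _ _ (fun _ => 0)) ?Sum0 // => s _; rewrite andbF.
- by rewrite (eq_Sum _ _ (fun _ => 0)) ?Sum0 // => s _; rewrite count_rcons' addn1.
rewrite (eq_Sum _ _ (fun s => 'X^(n - k) * (if count id s == k then 'X^(invR s) else 0))).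
  by rewrite Sum_mull -/(Tinv _ k) Tinv_gb.
move=> s Hs; rewrite last_rcons count_rcons' addn1 eqSS andbT andbT.
case: eqP => [Hc|]; last by rewrite mulr0.
rewrite invR_rcons addn0 -exprD; congr ('X^ _).
have := count_negb (rcons s true); rewrite size_rcons count_rcons' Hs Hc.
move=> H; have -> : count negb (rcons s true) = (n - k)%N by lia.
by [].
Qed.

Definition Tm N m := Sum N (fun s => if count id s == m then 'X^(majS N s) else 0).
Definition Om N m := Sum N (fun s => if (count id s == m) && last false s then 'X^(majS N s) else 0).
Definition Zm N m := Sum N (fun s => if (count id s == m) && ~~ last false s then 'X^(majS N s) else 0).
Definition Ob N m := Sum N (fun s => if (count id s == m) && last false s && ~~ gzS N s then 'X^(majS N s) else 0).
Definition Zb N m := Sum N (fun s => if (count id s == m) && ~~ last false s && ~~ gzS N s then 'X^(majS N s) else 0).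

Lemma T_split N m : Tm N m = Zm N m + Om N m.
Proof.
rewrite /Tm /Zm /Om -Sum_add; apply: eq_Sum => s _.
by case: (count id s == m); case: (last false s); rewrite /= ?addr0 ?add0r.
Qed.

Lemma O_rec N m : Om N.+1 m = if m is m'.+1 then Tm N m' else 0.
Proof.
rewrite /Om Sum_rcons.
rewrite (eq_Sum _ _ (fun _ => 0)); last by move=> s _; rewrite last_rcons andbF.
rewrite Sum0 add0r; case: m => [|m].
  by rewrite (eq_Sum _ _ (fun _ => 0)) ?Sum0 // => s _; rewrite count_rcons' addn1.
apply: eq_Sum => s Hs.
by rewrite count_rcons' addn1 eqSS last_rcons andbT majS_rcons // andbF addn0.
Qed.

Lemma Z_rec N m : Zm N.+1 m = Zm N m + 'X^N * Om N m.
Proof.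
rewrite /Zm Sum_rcons.
rewrite [X in _ + X](eq_Sum _ _ (fun _ => 0)); last by move=> s _; rewrite last_rcons andbF.
rewrite Sum0 addr0 -Sum_mull -Sum_add; apply: eq_Sum => s Hs.
rewrite count_rcons' addn0 last_rcons /= andbT majS_rcons // andbT.
case: (count id s == m); case: (last false s); rewrite /= ?addr0 ?add0r ?mulr0 ?addn0 //.
  by rewrite exprD mulrC.
by rewrite addr0.
Qed.

Lemma Om0 m : Om 0 m = 0. Proof. by rewrite /Om /= andbF. Qed.
Lemma Zm0 m : Zm 0 m = if m == 0%N then 1 else 0.
Proof. by rewrite /Zm /= /majS big_geq // expr0 andbT eq_sym. Qed.

Lemma Tm_gb_aux N : (forall m, Tm N m = gb N m) /\ (forall m, Zm N.+1 m = 'X^m * gb N m).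
Proof.
elim: N => [|N [IHT IHZ]].
  split=> m.
    by rewrite T_split Om0 addr0 Zm0; case: m.
  rewrite Z_rec Om0 mulr0 addr0 Zm0; case: m => [|m] /=; by rewrite ?mulr0 ?mulr1.
have HT : forall m, Tm N.+1 m = gb N.+1 m.
  move=> m; rewrite T_split IHZ O_rec.
  case: m => [|m]; first by rewrite !gb0 expr0 mulr1 addr0.
  by rewrite IHT gbS addrC.
split=> // m.
rewrite Z_rec IHZ O_rec.
case: m => [|m]; first by rewrite !gb0 mulr0 addr0.
rewrite IHT.
case: (leqP m N) => Hm.
  have E : N = (m + (N - m))%N by lia.
  have R := gbP2 m (N - m); rewrite -E in R.
  rewrite R mulrDr mulrA -exprD.
  rewrite (_ : (m.+1 + (N - m))%N = N.+1); last by lia.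
  done.
by rewrite !gb_gt ?mulr0 ?addr0 //; lia.
Qed.

Lemma Tm_gb N m : Tm N m = gb N m. Proof. by case: (Tm_gb_aux N) => ->. Qed.

Lemma Ob_rec N m : Ob N.+1 m = if m is m'.+1 then Ob N m' + Zb N m' else 0.
Proof.
rewrite /Ob Sum_rcons.
rewrite (eq_Sum _ _ (fun _ => 0)); last by move=> s _; rewrite last_rcons andbF.
rewrite Sum0 add0r; case: m => [|m].
  by rewrite (eq_Sum _ _ (fun _ => 0)) ?Sum0 // => s _; rewrite count_rcons' addn1.
rewrite /Zb -Sum_add; apply: eq_Sum => s Hs.
rewrite count_rcons' addn1 eqSS last_rcons andbT majS_rcons // andbF addn0 gz_true //.
by case: (count id s == m); case: (last false s); case: (gzS N s); rewrite /= ?addr0 ?add0r.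
Qed.

Lemma Zb_rec N m : Zb N.+1 m = 'X^N * Om N m.
Proof.
rewrite /Zb Sum_rcons.
rewrite [X in _ + X](eq_Sum _ _ (fun _ => 0)); last by move=> s _; rewrite last_rcons andbF.
rewrite Sum0 addr0 -Sum_mull; apply: eq_Sum => s Hs.
rewrite count_rcons' addn0 last_rcons /= andbT majS_rcons // andbT gz_false // negbK.
case: (count id s == m); case: (last false s); rewrite /= ?mulr0 //.
by rewrite exprD mulrC.
Qed.

Lemma Ob0 m : Ob 0 m = 0. Proof. by rewrite /Ob /= andbF. Qed.
Lemma Zb0 m : Zb 0 m = if m == 0%N then 1 else 0.
Proof.
rewrite /Zb /= /gzS /lzS /majS !big_geq // expr0 andbT /= eq_sym.
by case: (m == 0%N).
Qed.

Lemma Ob_1 N : Ob N.+2 1 = 0.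
Proof.
rewrite Ob_rec /= Ob_rec add0r Zb_rec.
case: N => [|N]; first by rewrite Om0 mulr0.
by rewrite O_rec mulr0.
Qed.

Lemma Ob_closed N m : Ob N.+2 m.+2 = 'X^(N - m) * gb N m.
Proof.
elim: N m => [|N IH] m.
  rewrite Ob_rec Ob_rec Ob0 add0r Zb0 Zb_rec Om0 mulr0 addr0.
  by case: m => [|m] //=; rewrite ?mulr0 ?expr0 ?mulr1.
rewrite Ob_rec Zb_rec O_rec Tm_gb.
case: m => [|m].
  by rewrite Ob_1 add0r !gb0 subn0.
rewrite IH.
case: (leqP m N) => Hm.
  rewrite gbS mulrDr mulrA -exprD.
  rewrite (_ : (N.+1 - m.+1 + m.+1)%N = N.+1); last by lia.
  by rewrite subSS.
by rewrite !gb_gt ?mulr0 ?addr0 //; lia.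
Qed.

Lemma KbarS_eq n m s : size s = n.+1 ->
  KbarS n m s = (count id s == m) && (last false s ==> gzS n.+1 s).
Proof. by move=> Hs; rewrite /KbarS watS_last. Qed.

Lemma Kmaj_sum n m : (1 <= n)%N ->
  Sum n.+1 (fun s => if KbarS n m s then 'X^(majS n.+1 s) else 0) = Kf n m.
Proof.
case: n => [|n] // _.
rewrite (eq_Sum _ _ (fun s => (if count id s == m then 'X^(majS n.+2 s) else 0)
   - (if (count id s == m) && last false s && ~~ gzS n.+2 s then 'X^(majS n.+2 s) else 0))); last first.
  move=> s Hs; rewrite KbarS_eq //.
  by case: (count id s == m); case: (gzS _ s); case: (last false s); rewrite /= ?subr0 ?subrr.
rewrite Sum_add Sum_opp -/(Tm _ m) -/(Ob _ m) Tm_gb /Kf; congr (_ - _).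
case: m => [|[|k]].
- by rewrite Ob_rec.
- by rewrite Ob_1.
by rewrite Ob_closed /= subSS subSS.
Qed.


Theorem theorem1p1 (n m : nat) :
  (1 <= n)%N -> (m <= n)%N ->
  qKap n m = \sum_(w : n.+1.-tuple bool | Kset n m w) 'X^(invw w)
  /\ qKap n m = \sum_(w : n.+1.-tuple bool | Kbarset n m w) 'X^(majw w).
Proof.
move=> Hn Hm; rewrite qKap_Kf //; split.
  rewrite -(Kinv_sum n m Hn) -tuple_Sum [RHS]big_mkcond; apply: eq_bigr => w _ //.
rewrite -(Kmaj_sum n m Hn) -tuple_Sum [RHS]big_mkcond; apply: eq_bigr => w _ //.
Qed.
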